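(* Let $\Delta$ be a finite $4$-valent graph, let $\mathcal{C}$ be a partition of $E\Delta$ into cycles, and let $G\le\mathrm{Aut}(\Delta)$ be arc-transitive and $\mathcal{C}$-invariant, so that $G\le\mathrm{Aut}(\mathrm{s}(\Delta,\mathcal{C}))$ via $(\alpha,C)^g=(\alpha^g,C^g)$. Suppose that $G\le A\le\mathrm{Aut}(\mathrm{s}(\Delta,\mathcal{C}))$, that $A$ is vertex-transitive on $\mathrm{s}(\Delta,\mathcal{C})$, and that for every vertex $v$ of $\mathrm{s}(\Delta,\mathcal{C})$ the group induced by $A_v$ on the neighbourhood of $v$ is cyclic of order $2$. Then $A\le\mathrm{Aut}(\Delta)$; that is, $A$ preserves the set of pairs $\{(\alpha,C),(\alpha,D)\}$ ($\alpha\in V\Delta$, $C\neq D$ the two cycles of $\mathcal{C}$ through $\alpha$), and under the identification of such a pair with $\alpha$, $A$ acts faithfully on $V\Delta$ as a group of automorphisms of $\Delta$.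
   Context: Splitting: for a $4$-valent graph $\Delta$ and a partition $\mathcal{C}$ of $E\Delta$ into cycles (each vertex lies on exactly two cycles of $\mathcal{C}$), $\mathrm{s}(\Delta,\mathcal{C})$ is the cubic graph with vertex set $\{(\alpha,C)\in V\Delta\times\mathcal{C} : \alpha\in VC\}$, where $(\alpha,C)$ and $(\beta,D)$ are adjacent iff either $C\ne D$ and $\alpha=\beta$, or $C=D$ and $\alpha,\beta$ are adjacent in $\Delta$. $G$ is $\mathcal{C}$-invariant if it permutes the cycles of $\mathcal{C}$. $A_v$ denotes the stabilizer of $v$ in $A$. *)

(* Defs.v *)
From mathcomp Require Import all_boot all_fingroup all_solvable.
Set Implicit Arguments. Unset Strict Implicit. Unset Printing Implicit Defensive.


Section Graphs.
Variable V : finType.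

Definition edges (adj : rel V) : {set {set V}} :=
  [set e : {set V} | [exists x, exists y, adj x y && (e == [set x; y])]].

Definition vset (C : {set {set V}}) : {set V} :=
  [set x | [exists e in C, x \in e]].

Definition is_cycle (C : {set {set V}}) : bool :=
  [&& C != set0,
      [forall x in vset C, #|[set e in C | x \in e]| == 2] &
      [forall x in vset C, forall y in vset C,
          connect (fun a b => [set a; b] \in C) x y]].

Definition cycle_decomposition (adj : rel V) (CC : {set {set {set V}}}) : Prop :=
  partition CC (edges adj) /\ {in CC, forall C, is_cycle C}.

Definition edge_img (g : {perm V}) (C : {set {set V}}) : {set {set V}} :=
  [set [set g x | x in e] | e : {set V} in C].

Definition is_aut (adj : rel V) (g : {perm V}) : Prop :=
  forall x y, adj (g x) (g y) = adj x y.

(* vertices of the splitting s(Delta, CC): pairs (alpha, C) with alpha in VC *)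
Definition svert (CC : {set {set {set V}}}) :=
  {p : V * {set {set V}} | (p.2 \in CC) && (p.1 \in vset p.2)}.

Definition sadj (CC : {set {set {set V}}}) : rel (svert CC) :=
  fun u w =>
    (((val u).1 == (val w).1) && ((val u).2 != (val w).2))
    || (((val u).2 == (val w).2) && ([set (val u).1; (val w).1] \in (val u).2)).

End Graphs.

Definition is_graph_aut (T : finType) (r : rel T) (a : {perm T}) : Prop :=
  forall x y, r (a x) (a y) = r x y.

(* Main.v *)
Require Import Defs.
From mathcomp Require Import all_boot all_fingroup all_solvable.
Local Open Scope group_scope.

Lemma edge2 {V : finType} {adj : rel V} : symmetric adj -> irreflexive adj ->
  forall e a, e \in edges adj -> a \in e ->
  exists b, [/\ adj a b, b != a & e = [set a; b]].
Proof.
move=> sym irr e a; rewrite inE => /existsP[x /existsP[y /andP[Hxy /eqP->]]].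
case/set2P=> ->.
  exists y; split=> //; apply/eqP=> Eyx; by move: Hxy; rewrite Eyx irr.
exists x; rewrite setUC; split=> //; first by rewrite sym.
apply/eqP=> Exy; by move: Hxy; rewrite Exy irr.
Qed.

Lemma adj_edge {V : finType} {adj : rel V} p q : adj p q -> [set p; q] \in edges adj.
Proof. move=> H; rewrite inE; apply/existsP; exists p; apply/existsP; exists q; by rewrite H eqxx. Qed.

Lemma pair_adj {V : finType} {adj : rel V} : symmetric adj -> irreflexive adj ->
  forall p q, [set p; q] \in edges adj -> adj p q.
Proof.
move=> sym irr p q He.
have [b [Hpb Hbp Eb]] := edge2 sym irr _ _ He (set21 p q).
have : q \in [set p; b] by rewrite -Eb set22.
case/set2P=> Eq; last by rewrite Eq.
have : b \in [set p; q] by rewrite Eb set22.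
by rewrite Eq setUid => /set1P Ebp; move: Hbp; rewrite Ebp eqxx.
Qed.

Lemma vsetP {V : finType} (C : {set {set V}}) x :
  reflect (exists2 e, e \in C & x \in e) (x \in vset C).
Proof.
rewrite inE; apply: (iffP existsP) => [[e /andP[]]|[e H1 H2]]; first by exists e.
by exists e; rewrite H1 H2.
Qed.

Lemma cyc2 {V : finType} (C : {set {set V}}) x : is_cycle C -> x \in vset C ->
  #|[set e in C | x \in e]| = 2.
Proof. by case/and3P=> _ /forallP H _ Hx; move/implyP: (H x) => /(_ Hx) /eqP. Qed.


Lemma uniqC {V : finType} {adj : rel V} {CC : {set {set {set V}}}} :
  cycle_decomposition adj CC -> forall C D e, C \in CC -> D \in CC -> e \in C -> e \in D -> C = D.
Proof.
move=> [/and3P[_ /trivIsetP Ht _] _] C D e HC HD HeC HeD.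
apply/eqP; apply: contraT => nCD.
by move: (disjointFr (Ht _ _ HC HD nCD) HeC); rewrite HeD.
Qed.

Lemma inC_edge {V : finType} {adj : rel V} {CC : {set {set {set V}}}} :
  cycle_decomposition adj CC -> forall C e, C \in CC -> e \in C -> e \in edges adj.
Proof.
move=> [/and3P[/eqP <- _ _] _] C e HC He; apply/bigcupP; by exists C.
Qed.

Lemma edge_inC {V : finType} {adj : rel V} {CC : {set {set {set V}}}} :
  cycle_decomposition adj CC -> forall e, e \in edges adj -> exists2 C, C \in CC & e \in C.
Proof.
move=> [/and3P[/eqP <- _ _] _] e /bigcupP[C HC He]; by exists C.
Qed.

Lemma nbr {V : finType} {adj : rel V} {CC : {set {set {set V}}}} :
  symmetric adj -> irreflexive adj -> cycle_decomposition adj CC ->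
  forall C a, C \in CC -> a \in vset C ->
  exists b, [/\ [set a; b] \in C, adj a b & b != a].
Proof.
move=> sym irr Hcd C a HC /vsetP[e He Hae].
have [b [Hab Hba Eb]] := edge2 sym irr _ _ (inC_edge Hcd _ _ HC He) Hae.
by exists b; rewrite -Eb.
Qed.

Lemma nbr2 {V : finType} {adj : rel V} {CC : {set {set {set V}}}} :
  symmetric adj -> irreflexive adj -> cycle_decomposition adj CC ->
  forall C a b, C \in CC -> [set a; b] \in C ->
  exists c, [/\ [set a; c] \in C, adj a c, c != b & c != a].
Proof.
move=> sym irr Hcd C a b HC Hab.
have Ha : a \in vset C by apply/vsetP; exists [set a; b]; rewrite ?set21.
have := cyc2 _ _ (Hcd.2 C HC) Ha.
rewrite (cardsD1 [set a; b]) inE Hab set21 /= add1n => -[] Hc.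
have : 0 < #|[set e in C | a \in e] :\ [set a; b]| by rewrite Hc.
rewrite card_gt0 => /set0Pn[e]; rewrite !inE => /and3P[neb HeC Hae].
have [c [Hac Hca Ec]] := edge2 sym irr _ _ (inC_edge Hcd _ _ HC HeC) Hae.
exists c; split=> //; first by rewrite -Ec.
by apply: contraNneq neb => Ecb; rewrite Ec Ecb.
Qed.

Lemma uniqD {V : finType} {adj : rel V} {CC : {set {set {set V}}}} :
  symmetric adj -> irreflexive adj -> (forall x, #|[set y | adj x y]| = 4) ->
  cycle_decomposition adj CC ->
  forall C D D' a, C \in CC -> D \in CC -> D' \in CC ->
  a \in vset C -> a \in vset D -> a \in vset D' -> C != D -> D' != C -> D' = D.
Proof.
move=> sym irr deg Hcd C D D' a HC HD HD' HaC HaD /vsetP[e HeD' Hae] nCD nD'C.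
pose Ea := [set e in edges adj | a \in e].
pose Ca := [set e in C | a \in e].
pose Da := [set e in D | a \in e].
have cEa : #|Ea| <= 4.
  rewrite -(deg a).
  apply: leq_trans (leq_imset_card (fun y => [set a; y]) [set y | adj a y]).
  apply: subset_leq_card; apply/subsetP => f; rewrite inE => /andP[Hf Haf].
  have [b [Hab _ ->]] := edge2 sym irr _ _ Hf Haf.
  by apply/imsetP; exists b; rewrite ?inE.
have cCa : #|Ca| = 2 by apply: cyc2 => //; apply: Hcd.2.
have cDa : #|Da| = 2 by apply: cyc2 => //; apply: Hcd.2.
have I0 : Ca :&: Da = set0.
  apply/setP => f; rewrite !inE; apply/negP => /andP[/andP[HfC _] /andP[HfD _]].
  by move/eqP: nCD; apply; apply: (uniqC Hcd _ _ f).
have sub : Ca :|: Da \subset Ea.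
  apply/subsetP => f; rewrite !inE => /orP[]/andP[Hf ->]; rewrite andbT.
    by have := inC_edge Hcd _ _ HC Hf; rewrite inE.
  by have := inC_edge Hcd _ _ HD Hf; rewrite inE.
have : Ca :|: Da == Ea by rewrite eqEcard sub cardsU I0 cards0 cCa cDa.
move/eqP => EE.
have : e \in Ea by rewrite inE Hae (inC_edge Hcd _ _ HD' HeD').
rewrite -EE !inE Hae !andbT => /orP[HeC|HeD].
  by move/eqP: nD'C; case; apply: (uniqC Hcd _ _ e).
by apply: (uniqC Hcd _ _ e).
Qed.

Theorem corollary2p10 (V : finType) (adj : rel V) (CC : {set {set {set V}}})
  (G : {group {perm V}}) (A : {group {perm (svert CC)}}) :
  symmetric adj -> irreflexive adj ->
  (forall x, #|[set y | adj x y]| = 4) ->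
  cycle_decomposition adj CC ->
  {in G, forall g : {perm V}, is_aut adj g} ->
  (forall x y x' y', adj x y -> adj x' y' ->
     exists2 g, g \in G & g x = x' /\ g y = y') ->
  {in G, forall g : {perm V}, {in CC, forall C, edge_img g C \in CC}} ->
  {in A, forall a : {perm (svert CC)}, is_graph_aut (@sadj V CC) a} ->
  {in G, forall g : {perm V}, exists2 a, a \in A &
     forall u : svert CC, val (a u) = (g (val u).1, edge_img g (val u).2)} ->
  (forall u w : svert CC, exists2 a, a \in A & a u = w) ->
  (forall v : svert CC,
     let Nv := [set w | @sadj V CC v w] in
     cyclic (restr_perm Nv @* 'C_A[v | 'P]) /\
     #|restr_perm Nv @* 'C_A[v | 'P]| = 2) ->
  (forall a, a \in A -> forall u w : svert CC,
      (val u).1 = (val w).1 -> (val (a u)).1 = (val (a w)).1) /\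
  (forall a, a \in A -> exists f : {perm V},
      (forall u : svert CC, (val (a u)).1 = f (val u).1) /\ is_aut adj f) /\
  (forall a, a \in A -> (forall u : svert CC, (val (a u)).1 = (val u).1) ->
      a = 1%g).
Proof.
move=> sym irr deg Hcd GautG Garc Ginv Aaut GA Atr Aloc.
have Hvs (u : svert CC) : ((val u).2 \in CC) && ((val u).1 \in vset (val u).2) := valP u.
have HuC (u : svert CC) : (val u).2 \in CC by case/andP: (Hvs u).
have HuV (u : svert CC) : (val u).1 \in vset (val u).2 by case/andP: (Hvs u).
have mk x C : C \in CC -> x \in vset C -> exists u : svert CC, val u = (x, C).
  move=> HC Hx.
  have P : ((x, C).2 \in CC) && ((x, C).1 \in vset (x, C).2) by rewrite /= HC Hx.
  by exists (exist _ (x, C) P).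
have eqS (u w : svert CC) : (val u).1 = (val w).1 -> (val u).2 = (val w).2 -> u = w.
  move=> E1 E2; apply: val_inj; by rewrite [val u]surjective_pairing E1 E2 -surjective_pairing.
have CoreG a b C : C \in CC -> [set a; b] \in C ->
    exists g, [/\ g \in G, g a = a, g b != b & edge_img g C = C].
  move=> HC Hab.
  have [c [Hac Hadj Hcb Hca]] := nbr2 sym irr Hcd _ _ _ HC Hab.
  have Hab' : adj a b by apply: pair_adj sym irr _ _ (inC_edge Hcd _ _ HC Hab).
  have [g Hg [ga gb]] := Garc a b a c Hab' Hadj.
  exists g; split=> //; first by rewrite gb.
  apply: (uniqC Hcd _ _ [set a; c]) => //; first exact: Ginv.
  apply/imsetP; exists [set a; b] => //; by rewrite imsetU1 imset_set1 ga gb.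
have CoreA (v w : svert CC) : (val v).2 = (val w).2 -> [set (val v).1; (val w).1] \in (val v).2 ->
    exists g : {perm V}, exists2 b, b \in A &
     [/\ forall u : svert CC, val (b u) = (g (val u).1, edge_img g (val u).2),
         g \in G, g (val v).1 = (val v).1 /\ edge_img g (val v).2 = (val v).2, b v = v & b w != w].
  move=> E2 Hin.
  have [g [Hg ga gb gC]] := CoreG _ _ _ (HuC v) Hin.
  have [b Hb Hbu] := GA g Hg.
  exists g; exists b => //; split=> //.
    by apply: eqS; rewrite Hbu /= ?ga ?gC.
  by apply: contra gb => /eqP Ebw; move: (f_equal (fun u => (val u).1) Ebw); rewrite Hbu /= => ->.
have Hsub (b : {perm svert CC}) u w : b \in A -> @sadj V CC u w -> @sadj V CC (b u) (b w).
  by move=> Hb; rewrite Aaut.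
have M (v w : svert CC) : (val v).1 = (val w).1 -> v != w ->
    forall b, b \in A -> b v = v -> b w = w.
  move=> E1 nvw b Hb bv.
  have nC : (val v).2 != (val w).2 by apply: contra nvw => /eqP E2; rewrite (eqS _ _ E1 E2).
  have [beta [Hin Hadj Hba]] := nbr sym irr Hcd _ _ (HuC v) (HuV v).
  have Hbv : beta \in vset (val v).2 by apply/vsetP; exists [set (val v).1; beta]; rewrite ?set22.
  have [w1 Ew1] := mk beta (val v).2 (HuC v) Hbv.
  have E21 : (val v).2 = (val w1).2 by rewrite Ew1.
  have E22 : [set (val v).1; (val w1).1] \in (val v).2 by rewrite Ew1.
  have [g [b' Hb' [Hbu Hg [ga gC] b'v b'w1]]] := CoreA v w1 E21 E22.
  have b'w : b' w = w.
    apply: eqS; rewrite Hbu /= -?E1 ?ga //.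
    apply: (uniqD sym irr deg Hcd (val v).2 (val w).2 _ (val v).1) => //.
    - exact: HuC.
    - exact: HuC.
    - exact: Ginv g Hg _ (HuC w).
    - by rewrite E1; exact: HuV.
    - case/vsetP: (HuV w) => e He Hae; apply/vsetP; exists [set g x | x in e].
        by apply/imsetP; exists e.
      by rewrite -ga E1; apply: imset_f.
    - apply: contra nC => /eqP E.
      apply/eqP; apply: (imset_inj (imset_inj (@perm_inj _ g))).
      change (edge_img g (val v).2 = edge_img g (val w).2); by rewrite gC E.
  pose Nv := [set x | @sadj V CC v x].
  have [_ cH] := Aloc v; rewrite -/Nv in cH.
  have inC c : c \in A -> c v = v -> c \in 'C_A[v | 'P].
    by move=> Hc cv; rewrite in_setI Hc; apply/astab1P; rewrite /= apermE.
  have inN c : c \in A -> c v = v -> c \in 'N(Nv | 'P).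
    by move=> Hc cv; apply/astabsP => x; rewrite /= apermE !inE -{1}cv Aaut.
  have mem c : c \in A -> c v = v -> restr_perm Nv c \in restr_perm Nv @* 'C_A[v | 'P].
    by move=> Hc cv; apply: (mem_morphim (restr_perm_morphism Nv) (inN c Hc cv) (inC c Hc cv)).
  have rE c x : c \in A -> c v = v -> x \in Nv -> restr_perm Nv c x = c x.
    by move=> Hc cv Hx; apply: restr_permE (inN c Hc cv) Hx.
  have w1N : w1 \in Nv by rewrite inE /sadj Ew1 /= eqxx Hin orbT.
  have wN : w \in Nv by rewrite inE /sadj E1 eqxx nC.
  have r1 : restr_perm Nv b' != 1.
    apply/eqP => E; move: b'w1; by rewrite -(rE b' w1 Hb' b'v w1N) E perm1 eqxx.
  case: (restr_perm Nv b =P 1) => [E|nE].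
    by rewrite -(rE b w Hb bv wN) E perm1.
  case: (restr_perm Nv b =P restr_perm Nv b') => [E'|nE'].
    by rewrite -(rE b w Hb bv wN) E' (rE b' w Hb' b'v wN).
  have c3 : #|(restr_perm Nv b |: [set 1; restr_perm Nv b'])| = 3.
    rewrite cardsU1 cards2 eq_sym r1.
    suff -> : restr_perm Nv b \notin [set 1; restr_perm Nv b'] by [].
    by rewrite !inE negb_or; apply/andP; split; apply/eqP.
  have : #|(restr_perm Nv b |: [set 1; restr_perm Nv b'])| <= 2.
    rewrite -cH; apply: subset_leq_card; apply/subsetP => x; rewrite !inE.
    case/or3P=> /eqP ->; [exact: mem | exact: group1 | exact: mem].
  by rewrite c3.
have L (v w : svert CC) : (val v).1 != (val w).1 -> @sadj V CC v w ->
    exists2 b, b \in A & b v = v /\ b w != w.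
  move=> ne; rewrite /sadj (negbTE ne) /= => /andP[/eqP E2 Hin].
  have [g [b Hb [_ _ _ bv bw]]] := CoreA v w E2 Hin.
  by exists b.
have P1 a : a \in A -> forall u w : svert CC, (val u).1 = (val w).1 -> (val (a u)).1 = (val (a w)).1.
  move=> Ha u w E; case: (eqVneq u w) => [->//|nuw].
  apply/eqP; apply: contraT => ne.
  have nC : (val u).2 != (val w).2 by apply: contra nuw => /eqP E2; rewrite (eqS _ _ E E2).
  have suw : @sadj V CC u w by rewrite /sadj E eqxx nC.
  have [b Hb [bu bw]] := L _ _ ne (Hsub a u w Ha suw).
  have Hc : a * b * a^-1 \in A by rewrite !groupM ?groupV.
  have cu : (a * b * a^-1) u = u by rewrite !permM bu permK.
  have := M u w E nuw _ Hc cu; rewrite !permM => E'.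
  by move: bw; rewrite -{2}E' permKV eqxx.
have exV x : exists u : svert CC, (val u).1 = x.
  have : 0 < #|[set y | adj x y]| by rewrite deg.
  rewrite card_gt0 => /set0Pn[y]; rewrite inE => Hxy.
  have [C HC Hin] := edge_inC Hcd _ (adj_edge _ _ Hxy).
  have Hx : x \in vset C by apply/vsetP; exists [set x; y]; rewrite ?set21.
  have [u Eu] := mk x C HC Hx; exists u; by rewrite Eu.
have Hf a : a \in A -> exists f : V -> V, forall u : svert CC, (val (a u)).1 = f (val u).1.
  move=> Ha.
  exists (fun x => if [pick u : svert CC | (val u).1 == x] is Some u then (val (a u)).1 else x).
  move=> u; case: pickP => [u' /eqP Eu'|none]; first by apply: P1 => //; rewrite Eu'.
  by move: (none u); rewrite eqxx.
have inv a b (f g : V -> V) : a \in A -> (forall u : svert CC, (val (a u)).1 = f (val u).1) ->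
    (forall u : svert CC, (val (b u)).1 = g (val u).1) -> b = a^-1 -> cancel f g.
  move=> Ha Hfa Hgb Eb x; have [u <-] := exV x; by rewrite -Hfa -Hgb Eb permK.
have K a (f : V -> V) : a \in A -> (forall u : svert CC, (val (a u)).1 = f (val u).1) ->
    injective f -> forall x y, adj x y -> adj (f x) (f y).
  move=> Ha Hfa finj x y Hxy.
  have [C HC Hin] := edge_inC Hcd _ (adj_edge _ _ Hxy).
  have Hx : x \in vset C by apply/vsetP; exists [set x; y]; rewrite ?set21.
  have Hy : y \in vset C by apply/vsetP; exists [set x; y]; rewrite ?set22.
  have [u Eu] := mk x C HC Hx; have [w Ew] := mk y C HC Hy.
  have suw : @sadj V CC u w by rewrite /sadj Eu Ew /= eqxx Hin orbT.
  have := Hsub a u w Ha suw; rewrite {1}/sadj => /orP[/andP[/eqP E _]|/andP[_ Hin']].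
    move: E; rewrite !Hfa Eu Ew /= => /finj Exy.
    by move: Hxy; rewrite Exy irr.
  have He := inC_edge Hcd _ _ (HuC (a u)) Hin'.
  move: He; rewrite !Hfa Eu Ew /=; exact: pair_adj sym irr _ _.
split; first exact: P1.
split.
  move=> a Ha.
  have Hai : a^-1 \in A by rewrite groupV.
  have [f Hfa] := Hf a Ha; have [f' Hf'] := Hf _ Hai.
  have fK : cancel f f' := inv a _ f f' Ha Hfa Hf' erefl.
  have f'K : cancel f' f := inv _ a f' f Hai Hf' Hfa ltac:(by rewrite invgK).
  have finj := can_inj fK; have f'inj := can_inj f'K.
  exists (perm finj); split; first by move=> u; rewrite permE Hfa.
  move=> x y; rewrite !permE; apply/idP/idP => H.
    by have := K _ f' Hai Hf' f'inj (f x) (f y) H; rewrite !fK.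
  exact: K a f Ha Hfa finj x y H.
move=> a Ha Hfix; apply/permP => u; rewrite perm1.
apply/eqP; apply: contraT => ne.
have E1 : (val (a u)).1 = (val u).1 := Hfix u.
have nC : (val (a u)).2 != (val u).2 by apply: contra ne => /eqP E2; rewrite (eqS _ _ E1 E2).
have [beta [Hin Hadj Hba]] := nbr sym irr Hcd _ _ (HuC u) (HuV u).
have Hbv : beta \in vset (val u).2 by apply/vsetP; exists [set (val u).1; beta]; rewrite ?set22.
have [w1 Ew1] := mk beta (val u).2 (HuC u) Hbv.
have suw1 : @sadj V CC u w1 by rewrite /sadj Ew1 /= eqxx Hin orbT.
have := Hsub a u w1 Ha suw1; rewrite /sadj Hfix (Hfix w1) Ew1 /= eq_sym (negbTE Hba) /=.
case/andP=> _ Hin'.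
move/eqP: nC; case; apply: (uniqC Hcd _ _ _ (HuC (a u)) (HuC u) Hin' Hin).
Qed.
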